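(* Let $\mathcal{G}$ be an ultragraph, $R$ a unital commutative ring, and $\{R_e,D_A,f_e\}_{e\in\mathcal{G}^1,A\in\mathcal{G}^0}$ a $\mathcal{G}$-algebraic branching system on a set $X$. Let $M$ be the $R$-module of all maps $X\to R$. Then there exists a unique $R$-algebra homomorphism $\pi:L_R(\mathcal{G})\to \mathrm{Hom}_R(M)$ such that, for each $e\in\mathcal{G}^1$, $A\in\mathcal{G}^0$ and $\phi\in M$: $\pi(s_e)(\phi)=(\phi\circ f_e^{-1})\cdot 1_{R_e}$, $\pi(s_e^* )(\phi)=(\phi\circ f_e)\cdot 1_{D_{r(e)}}$ and $\pi(p_A)(\phi)=1_{D_A}\phi$. Here $(\phi\circ f_e^{-1})\cdot 1_{R_e}$ denotes the map that equals $\phi(f_e^{-1}(x))$ at $x\in R_e$ and $0$ elsewhere, and $(\phi\circ f_e)\cdot 1_{D_{r(e)}}$ the map that equals $\phi(f_e(x))$ at $x\in D_{r(e)}$ and $0$ elsewhere.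
   Context: An ultragraph $\mathcal{G}=(G^0,\mathcal{G}^1,r,s)$ consists of sets $G^0$, $\mathcal{G}^1$, a map $s:\mathcal{G}^1\to G^0$ and a map $r:\mathcal{G}^1\to P(G^0)\setminus\{\emptyset\}$. $\mathcal{G}^0$ is the smallest subset of $P(G^0)$ containing $\{v\}$ ($v\in G^0$) and $r(e)$ ($e\in\mathcal{G}^1$), closed under finite unions and intersections; write $p_v=p_{\{v\}}$, $D_v=D_{\{v\}}$. $L_R(\mathcal{G})$ is the universal $R$-algebra generated by $\{s_e,s_e^*:e\in\mathcal{G}^1\}\cup\{p_A:A\in\mathcal{G}^0\}$ subject to: (1) $p_\emptyset=0$, $p_Ap_B=p_{A\cap B}$, $p_{A\cup B}=p_A+p_B-p_{A\cap B}$; (2) $p_{s(e)}s_e=s_ep_{r(e)}=s_e$, $p_{r(e)}s_e^*=s_e^*p_{s(e)}=s_e^*$; (3) $s_e^*s_f=\delta_{e,f}p_{r(e)}$; (4) $p_v=\sum_{s(e)=v}s_es_e^*$ whenever $0<|s^{-1}(v)|<\infty$. A $\mathcal{G}$-algebraic branching system on $X$ is a family of subsets $R_e,D_A\subseteq X$ and maps $f_e$ with: (i) $R_e\cap R_f=\emptyset$ for $e\neq f$; (ii) $D_\emptyset=\emptyset$, $D_A\cap D_B=D_{A\cap B}$, $D_A\cup D_B=D_{A\cup B}$; (iii) $R_e\subseteq D_{s(e)}$; (iv) $D_v=\bigcup_{e\in s^{-1}(v)}R_e$ whenever $0<|s^{-1}(v)|<\infty$; (v) $f_e:D_{r(e)}\to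 R_e$ is a bijection with inverse $f_e^{-1}$. $1_Y$ denotes the characteristic function of $Y\subseteq X$; $\mathrm{Hom}_R(M)$ is the algebra of $R$-module endomorphisms of $M$. *)

(* Defs.v *)
From HB Require Import structures.
From mathcomp Require Import all_boot all_algebra.
From mathcomp Require Import boolp classical_sets.
From Stdlib Require Import List.

Set Implicit Arguments.
Unset Strict Implicit.
Unset Printing Implicit Defensive.

Import GRing.Theory.
Local Open Scope ring_scope.
Local Open Scope classical_set_scope.

Record ultragraph := Ultragraph {
  ug_V : Type;
  ug_E : Type;
  ug_s : ug_E -> ug_V;
  ug_r : ug_E -> set ug_V;
  ug_r_neq0 : forall e, ug_r e !=set0
}.

Inductive ugG0 (G : ultragraph) : set (ug_V G) -> Prop :=
| ugG0_vert v : ugG0 [set v]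
| ugG0_range e : ugG0 (ug_r e)
| ugG0_empty : ugG0 set0
| ugG0_union A B : ugG0 A -> ugG0 B -> ugG0 (A `|` B)
| ugG0_inter A B : ugG0 A -> ugG0 B -> ugG0 (A `&` B).

Definition src_enum (G : ultragraph) (v : ug_V G) (l : list (ug_E G)) : Prop :=
  NoDup l /\ (forall e, In e l <-> ug_s e = v).

Definition fin_nonempty_src (G : ultragraph) (v : ug_V G) : Prop :=
  (exists e, ug_s e = v) /\ (exists l : list (ug_E G), forall e, In e l <-> ug_s e = v).

Record nualg (R : comPzRingType) := NUAlg {
  nua_car :> lmodType R;
  nua_mul : nua_car -> nua_car -> nua_car;
  nua_mulA : associative nua_mul;
  nua_mulDl : left_distributive nua_mul +%R;
  nua_mulDr : right_distributive nua_mul +%R;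
  nua_scalerAl : forall (a : R) (x y : nua_car), a *: nua_mul x y = nua_mul (a *: x) y;
  nua_scalerAr : forall (a : R) (x y : nua_car), a *: nua_mul x y = nua_mul x (a *: y)
}.

Definition nua_hom (R : comPzRingType) (A B : nualg R) (phi : A -> B) : Prop :=
  (forall x y : A, phi (x + y) = phi x + phi y) /\
  (forall (a : R) (x : A), phi (a *: x) = a *: phi x) /\
  (forall x y : A, phi (nua_mul x y) = nua_mul (phi x) (phi y)).

(** A family in B satisfying the defining relations (1)-(4) of L_R(G).
    [p A] is only meaningful for A in \mathcal{G}^0. *)
Definition ug_family (G : ultragraph) (R : comPzRingType) (B : nualg R)
    (s ss : ug_E G -> B) (p : set (ug_V G) -> B) : Prop :=
  p set0 = 0 /\
  (forall A C, ugG0 A -> ugG0 C -> nua_mul (p A) (p C) = p (A `&` C)) /\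
  (forall A C, ugG0 A -> ugG0 C -> p (A `|` C) = p A + p C - p (A `&` C)) /\
  (forall e, nua_mul (p [set ug_s e]) (s e) = s e) /\
  (forall e, nua_mul (s e) (p (ug_r e)) = s e) /\
  (forall e, nua_mul (p (ug_r e)) (ss e) = ss e) /\
  (forall e, nua_mul (ss e) (p [set ug_s e]) = ss e) /\
  (forall e, nua_mul (ss e) (s e) = p (ug_r e)) /\
  (forall e f, e <> f -> nua_mul (ss e) (s f) = 0) /\
  (forall v l, src_enum v l -> l <> nil ->
     p [set v] = \sum_(e <- l) nua_mul (s e) (ss e)).

(** (L, s, s^*, p) is the universal R-algebra generated by a G-family,
    i.e. it is (a copy of) the Leavitt path algebra L_R(G). *)
Definition is_LPA (G : ultragraph) (R : comPzRingType) (L : nualg R)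
    (s ss : ug_E G -> L) (p : set (ug_V G) -> L) : Prop :=
  ug_family s ss p /\
  forall (B : nualg R) (t tt : ug_E G -> B) (q : set (ug_V G) -> B),
    ug_family t tt q ->
    exists phi : L -> B,
      [/\ nua_hom phi,
          (forall e, phi (s e) = t e),
          (forall e, phi (ss e) = tt e),
          (forall A, ugG0 A -> phi (p A) = q A) &
          (forall phi' : L -> B, nua_hom phi' ->
             (forall e, phi' (s e) = t e) ->
             (forall e, phi' (ss e) = tt e) ->
             (forall A, ugG0 A -> phi' (p A) = q A) ->
             forall x, phi' x = phi x)].

(** * G-algebraic branching systems on X.
    [f e] is f_e : D_{r(e)} -> R_e and [finv e] its inverse f_e^{-1}
    (values outside the relevant domains are irrelevant). *)
Definition branching_system (G : ultragraph) (X : Type)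
    (Rs : ug_E G -> set X) (D : set (ug_V G) -> set X)
    (f finv : ug_E G -> X -> X) : Prop :=
  (forall e e', e <> e' -> Rs e `&` Rs e' = set0) /\
  D set0 = set0 /\
  (forall A C, ugG0 A -> ugG0 C -> D A `&` D C = D (A `&` C)) /\
  (forall A C, ugG0 A -> ugG0 C -> D A `|` D C = D (A `|` C)) /\
  (forall e, Rs e `<=` D [set ug_s e]) /\
  (forall v, fin_nonempty_src v ->
     D [set v] = \bigcup_(e in [set e | ug_s e = v]) Rs e) /\
  (forall e x, D (ug_r e) x -> Rs e (f e x)) /\
  (forall e y, Rs e y -> D (ug_r e) (finv e y)) /\
  (forall e x, D (ug_r e) x -> finv e (f e x) = x) /\
  (forall e y, Rs e y -> f e (finv e y) = y).

(** Elements of Hom_R(M), M = X -> R: R-linear maps M -> M.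
    [endo_hom pi] says pi : L -> Hom_R(M) is an R-algebra homomorphism
    (product in Hom_R(M) is composition). *)
Definition endo_hom (R : comPzRingType) (L : nualg R) (X : Type)
    (pi : L -> (X -> R) -> (X -> R)) : Prop :=
  (forall u phi psi, pi u (fun x => phi x + psi x) = (fun x => pi u phi x + pi u psi x)) /\
  (forall u (a : R) phi, pi u (fun x => a * phi x) = (fun x => a * pi u phi x)) /\
  (forall u v, pi (u + v) = (fun phi x => pi u phi x + pi v phi x)) /\
  (forall (a : R) u, pi (a *: u) = (fun phi x => a * pi u phi x)) /\
  (forall u v, pi (nua_mul u v) = (fun phi => pi u (pi v phi))).

Definition op_s (R : comPzRingType) (X : Type) (Re : set X) (fe_inv : X -> X)
    (phi : X -> R) : X -> R :=
  fun x => if `[< Re x >] then phi (fe_inv x) else 0.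

Definition op_ss (R : comPzRingType) (X : Type) (Dre : set X) (fe : X -> X)
    (phi : X -> R) : X -> R :=
  fun x => if `[< Dre x >] then phi (fe x) else 0.

Definition op_p (R : comPzRingType) (X : Type) (DA : set X)
    (phi : X -> R) : X -> R :=
  fun x => if `[< DA x >] then phi x else 0.

(* Main.v *)
Require Import Defs.
From HB Require Import structures.
From mathcomp Require Import all_boot all_algebra.
From mathcomp Require Import boolp classical_sets.
Import GRing.Theory.
Local Open Scope ring_scope.
Local Open Scope classical_set_scope.

Record endo (X : Type) (R : comPzRingType) := Endo {
  ev :> (X -> R) -> (X -> R);
  ev_add : forall phi psi, ev (fun x => phi x + psi x) = (fun x => ev phi x + ev psi x);
  ev_scale : forall a phi, ev (fun x => a * phi x) = (fun x => a * ev phi x) }.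

Arguments ev {X R}.
Arguments Endo {X R}.
Lemma endo_eq X (R : comPzRingType) (u v : endo X R) : (forall phi x, u phi x = v phi x) -> u = v.
Proof.
case: u v => [u ua us] [v va vs] /= H.
have E : u = v by apply: funext => phi; apply: funext => x; exact: H.
subst v. by rewrite (Prop_irrelevance ua va) (Prop_irrelevance us vs).
Qed.

HB.instance Definition _ X (R : comPzRingType) := gen_eqMixin (endo X R).
HB.instance Definition _ X (R : comPzRingType) := gen_choiceMixin (endo X R).

Definition e0 X (R : comPzRingType) : endo X R.
refine (@Endo X R (fun _ _ => 0) _ _).
- by move=> *; apply: funext => x; rewrite addr0.
- by move=> *; apply: funext => x; rewrite mulr0.
Defined.

Definition eadd X (R : comPzRingType) (u v : endo X R) : endo X R.
refine (@Endo X R (fun phi x => u phi x + v phi x) _ _).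
- by move=> phi psi; apply: funext => x; rewrite !ev_add addrACA.
- by move=> a phi; apply: funext => x; rewrite !ev_scale mulrDr.
Defined.

Definition eopp X (R : comPzRingType) (u : endo X R) : endo X R.
refine (@Endo X R (fun phi x => - u phi x) _ _).
- by move=> phi psi; apply: funext => x; rewrite !ev_add opprD.
- by move=> a phi; apply: funext => x; rewrite !ev_scale mulrN.
Defined.

Definition escale X (R : comPzRingType) (a : R) (u : endo X R) : endo X R.
refine (@Endo X R (fun phi x => a * u phi x) _ _).
- by move=> phi psi; apply: funext => x; rewrite !ev_add mulrDr.
- by move=> b phi; apply: funext => x; rewrite !ev_scale mulrCA.
Defined.

Definition emul X (R : comPzRingType) (u v : endo X R) : endo X R.
refine (@Endo X R (fun phi => u (v phi)) _ _).
- by move=> phi psi; rewrite !ev_add.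
- by move=> b phi; rewrite !ev_scale.
Defined.

Arguments eadd {X R}.
Arguments eopp {X R}.
Arguments escale {X R}.
Arguments emul {X R}.
Lemma eaddA X (R : comPzRingType) : associative (@eadd X R).
Proof. by move=> u v w; apply: endo_eq => phi x /=; rewrite addrA. Qed.
Lemma eaddC X (R : comPzRingType) : commutative (@eadd X R).
Proof. by move=> u v; apply: endo_eq => phi x /=; rewrite addrC. Qed.
Lemma eadd0 X (R : comPzRingType) : left_id (@e0 X R) (@eadd X R).
Proof. by move=> u; apply: endo_eq => phi x /=; rewrite add0r. Qed.
Lemma eaddN X (R : comPzRingType) : left_inverse (@e0 X R) (@eopp X R) (@eadd X R).
Proof. by move=> u; apply: endo_eq => phi x /=; rewrite addNr. Qed.

HB.instance Definition _ X (R : comPzRingType) := GRing.isZmodule.Build (endo X R)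
  (@eaddA X R) (@eaddC X R) (@eadd0 X R) (@eaddN X R).

Lemma escaleA X (R : comPzRingType) (a b : R) (v : endo X R) : escale a (escale b v) = escale (a * b) v.
Proof. by apply: endo_eq => phi x /=; rewrite mulrA. Qed.
Lemma escale1 X (R : comPzRingType) : left_id 1 (@escale X R).
Proof. by move=> u; apply: endo_eq => phi x /=; rewrite mul1r. Qed.
Lemma escaleDr X (R : comPzRingType) : right_distributive (@escale X R) +%R.
Proof. by move=> a u v; apply: endo_eq => phi x /=; rewrite mulrDr. Qed.
Lemma escaleDl X (R : comPzRingType) (v : endo X R) : {morph (@escale X R)^~ v: a b / a + b}.
Proof. by move=> a b; apply: endo_eq => phi x /=; rewrite mulrDl. Qed.

HB.instance Definition _ X (R : comPzRingType) := GRing.Zmodule_isLmodule.Build R (endo X R)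
  (@escaleA X R) (@escale1 X R) (@escaleDr X R) (@escaleDl X R).

Lemma emulA X (R : comPzRingType) : associative (@emul X R).
Proof. by move=> u v w; apply: endo_eq. Qed.
Lemma emulDl X (R : comPzRingType) : left_distributive (@emul X R) +%R.
Proof. by move=> u v w; apply: endo_eq. Qed.
Lemma emulDr X (R : comPzRingType) : right_distributive (@emul X R) +%R.
Proof. by move=> u v w; apply: endo_eq => phi x /=; rewrite ev_add. Qed.
Lemma emulZl X (R : comPzRingType) (a : R) (x y : endo X R) : a *: emul x y = emul (a *: x) y.
Proof. by apply: endo_eq. Qed.
Lemma emulZr X (R : comPzRingType) (a : R) (x y : endo X R) : a *: emul x y = emul x (a *: y).
Proof. by apply: endo_eq => phi z /=; rewrite ev_scale. Qed.

Definition Ealg X (R : comPzRingType) : nualg R := @NUAlg R (endo X R) (@emul X R)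
  (@emulA X R) (@emulDl X R) (@emulDr X R) (@emulZl X R) (@emulZr X R).

Definition opE X (R : comPzRingType) (P : set X) (h : X -> X) : endo X R.
refine (@Endo X R (fun phi x => if `[< P x >] then phi (h x) else 0) _ _).
- by move=> phi psi; apply: funext => x; case: ifP; rewrite ?addr0.
- by move=> a phi; apply: funext => x; case: ifP; rewrite ?mulr0.
Defined.

Lemma sum_ev X (R : comPzRingType) (T : Type) (l : list T) (F : T -> endo X R) phi x :
  (\sum_(e <- l) F e) phi x = \sum_(e <- l) F e phi x.
Proof.
elim: l => [|a l IH]; first by rewrite !big_nil.
by rewrite !big_cons -IH.
Qed.

Lemma sum_disj (T X : Type) (R : comPzRingType) (Rs : T -> set X) (a : R) x (l : list T) :
  (forall e e', e <> e' -> Rs e `&` Rs e' = set0) -> List.NoDup l ->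
  \sum_(e <- l) (if `[< Rs e x >] then a else 0) =
  if `[< exists e, List.In e l /\ Rs e x >] then a else 0.
Proof.
move=> Hd; elim: l => [|e l IH] Hn.
  rewrite big_nil asboolF //; by move=> [? []].
inversion Hn as [|? ? Hnin Hn']; subst.
rewrite big_cons IH //.
case: (asboolP (Rs e x)) => He.
  rewrite (asboolT (ex_intro _ e (conj (or_introl erefl) He))).
  rewrite asboolF ?addr0 // => -[e' [Hin He']].
  have Hne : e <> e' by move=> E; subst; exact: Hnin.
  have := Hd _ _ Hne; move/seteqP => [+ _] => /(_ x (conj He He')). by [].
rewrite add0r; case: (asboolP (exists e0, List.In e0 l /\ Rs e0 x)) => H.
  case: H => e' [? ?]; rewrite asboolT //; exists e'; split => //; by right.
rewrite asboolF // => -[e' [[<-|Hin] H']] //; apply: H; by exists e'.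
Qed.

Lemma asboolI T (P Q : set T) x : `[< (P `&` Q) x >] = `[< P x >] && `[< Q x >].
Proof.
case: (asboolP (P x)) => H1; case: (asboolP (Q x)) => H2 /=.
- by rewrite asboolT.
- by rewrite asboolF // => -[].
- by rewrite asboolF // => -[].
- by rewrite asboolF // => -[].
Qed.

Lemma asboolU T (P Q : set T) x : `[< (P `|` Q) x >] = `[< P x >] || `[< Q x >].
Proof.
case: (asboolP (P x)) => H1; case: (asboolP (Q x)) => H2 /=.
- by rewrite asboolT //; left.
- by rewrite asboolT //; left.
- by rewrite asboolT //; right.
- by rewrite asboolF // => -[].
Qed.

Theorem mainTheorem4 (G : ultragraph) (R : comPzRingType) (L : nualg R)
    (s ss : ug_E G -> L) (p : set (ug_V G) -> L)
    (HL : is_LPA s ss p)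
    (X : Type) (Rs : ug_E G -> set X) (D : set (ug_V G) -> set X)
    (f finv : ug_E G -> X -> X)
    (HB : branching_system Rs D f finv) :
  exists pi : L -> (X -> R) -> (X -> R),
    [/\ endo_hom pi,
        (forall e phi, pi (s e) phi = op_s (Rs e) (finv e) phi),
        (forall e phi, pi (ss e) phi = op_ss (D (ug_r e)) (f e) phi),
        (forall A phi, ugG0 A -> pi (p A) phi = op_p (D A) phi) &
        (forall pi' : L -> (X -> R) -> (X -> R), endo_hom pi' ->
           (forall e phi, pi' (s e) phi = op_s (Rs e) (finv e) phi) ->
           (forall e phi, pi' (ss e) phi = op_ss (D (ug_r e)) (f e) phi) ->
           (forall A phi, ugG0 A -> pi' (p A) phi = op_p (D A) phi) ->
           forall u, pi' u = pi u)].
Proof.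
case: HL => _ Huniv.
case: HB => [Hdisj [HD0 [HDI [HDU [HRs [HDv [Hf [Hfi [Hfif Hffi]]]]]]]]].
pose B := Ealg X R.
pose t e : B := @opE X R (Rs e) (finv e).
pose tt e : B := @opE X R (D (ug_r e)) (f e).
pose q A : B := @opE X R (D A) id.
have Hfam : ug_family t tt q.
  have disj e e' y : e <> e' -> Rs e y -> Rs e' y -> False.
    move=> Hne H1 H2; have := Hdisj _ _ Hne; move/seteqP => [+ _].
    by move=> /(_ y (conj H1 H2)).
  split.
    by apply: endo_eq => psi x /=; rewrite HD0 asboolF.
  split.
    move=> A C HA HC; apply: endo_eq => psi x /=; rewrite -HDI // asboolI.
    by case: `[< D A x >]; case: `[< D C x >].
  split.
    move=> A C HA HC; apply: endo_eq => psi x /=.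
    rewrite -HDI // -HDU // asboolI asboolU.
    case: `[< D A x >]; case: `[< D C x >] => /=;
      first [by rewrite addrK | by rewrite addr0 subr0 | by rewrite add0r subr0 | by rewrite addr0 subr0].
  split.
    move=> e; apply: endo_eq => psi x /=.
    case: (asboolP (Rs e x)) => H; last by case: ifP.
    by rewrite (asboolT (HRs _ _ H)).
  split.
    move=> e; apply: endo_eq => psi x /=.
    case: (asboolP (Rs e x)) => H //.
    by rewrite (asboolT (Hfi _ _ H)).
  split.
    move=> e; apply: endo_eq => psi x /=.
    by case: `[< D (ug_r e) x >].
  split.
    move=> e; apply: endo_eq => psi x /=.
    case: (asboolP (D (ug_r e) x)) => H //.
    by rewrite (asboolT (HRs _ _ (Hf _ _ H))).
  split.
    move=> e; apply: endo_eq => psi x /=.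
    case: (asboolP (D (ug_r e) x)) => H //.
    by rewrite (asboolT (Hf _ _ H)) Hfif.
  split.
    move=> e e' Hne; apply: endo_eq => psi x /=.
    case: (asboolP (D (ug_r e) x)) => H //.
    rewrite asboolF // => H'.
    exact: (disj _ _ _ Hne (Hf _ _ H) H').
  move=> v l [Hnd Hl] Hnn; apply: endo_eq => psi x.
  rewrite sum_ev.
  have Ht e : (nua_mul (t e) (tt e) : B) psi x = if `[< Rs e x >] then psi x else 0.
    rewrite /=; case: (asboolP (Rs e x)) => H //.
    by rewrite (asboolT (Hfi _ _ H)) Hffi.
  rewrite (eq_bigr _ (fun e _ => Ht e)).
  rewrite (@sum_disj _ _ _ Rs (psi x) x l Hdisj Hnd) /=.
  have Hfin : fin_nonempty_src v.
    split; last by exists l.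
    case: l Hnn Hl {Hnd} => [//|e l] _ Hl; exists e; apply/Hl; by left.
  rewrite HDv //.
  case: (asboolP (exists e, List.In e l /\ Rs e x)) => H.
    case: H => e [Hin He]; rewrite asboolT //; exists e => //; exact/Hl.
  rewrite asboolF // => -[e He He']; apply: H; exists e; split => //; exact/Hl.

case: (Huniv B t tt q Hfam) => phi [[Ha [Hsc Hm]] Hs Hss Hp Huniq].
exists (fun u => ev (phi u)); split.
- split; first by move=> u; exact: ev_add.
  split; first by move=> u; exact: ev_scale.
  split; first by move=> u v; rewrite Ha.
  split; first by move=> a u; rewrite Hsc.
  by move=> u v; rewrite Hm.
- by move=> e psi; rewrite Hs.
- by move=> e psi; rewrite Hss.
- by move=> A psi HA; rewrite Hp.
move=> pi' [h1 [h2 [h3 [h4 h5]]]] Hs' Hss' Hp' u.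
pose phi' u : B := Endo (pi' u) (h1 u) (h2 u).
have Hh : nua_hom phi'.
  split; first by move=> x y; apply: endo_eq => psi z; rewrite /= h3.
  split; first by move=> a x; apply: endo_eq => psi z; rewrite /= h4.
  by move=> x y; apply: endo_eq => psi z; rewrite /= h5.
have := Huniq phi' Hh.
have E := Huniq phi' Hh _ _ _ u.
rewrite -E //.
- by move=> e; apply: endo_eq => psi z; rewrite /= Hs'.
- by move=> e; apply: endo_eq => psi z; rewrite /= Hss'.
- by move=> A HA; apply: endo_eq => psi z; rewrite /= Hp'.
Qed.
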